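(* Let $G$ be a connected graph which is not a tree. If the length of the longest cycle in $G$ is at most $4$, then $G$ has no good vertex.
   Context: All graphs are finite, simple, undirected. For a connected graph $G$, the Wiener index is $W(G)=\sum_{\{u,v\}\subseteq V(G)} \mathrm{dist}_G(u,v)$, the sum over unordered pairs of distinct vertices; the Wiener index of a disconnected graph is defined to be $\infty$. A vertex $v$ of a connected graph $G$ is good if $W(G)=W(G-v)$, where $G-v$ is obtained by deleting $v$ and its incident edges. *)

(* Defs.v *)
(* A simple graph G = (V, e) : vertex set V : {set T} of a
   finType T, adjacency e : rel T (assumed symmetric and irreflexive in the
   theorem); the graph on V is the subgraph of (T, e) induced by V. *)
From mathcomp Require Import all_boot all_order.
Set Implicit Arguments. Unset Strict Implicit. Unset Printing Implicit Defensive.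

Section Graphs.
Variables (T : finType) (e : rel T).

Definition relV (V : {set T}) : rel T := fun a b => [&& a \in V, b \in V & e a b].

Definition connectedb (V : {set T}) : bool :=
  [forall x in V, forall y in V, connect (relV V) x y].

Definition walkb (V : {set T}) (x y : T) (k : nat) : bool :=
  [exists t : k.-tuple T, path (relV V) x t && (last x t == y)].

(* distance in the graph on V: least k such that a walk of length k exists
   (searched among 0 .. #|T|-1, which contains the true distance whenever
   x, y lie in the same component of the graph on V) *)
Definition dist (V : {set T}) (x y : T) : nat :=
  find (walkb V x y) (iota 0 #|T|).

(* Wiener index: sum of distances over unordered pairs of distinct vertices;
   None encodes infinity (disconnected graph). *)
Definition wiener (V : {set T}) : option nat :=
  if connectedb V then
    Some (\sum_(u in V) \sum_(w in V | (enum_rank u < enum_rank w)%N) dist V u w)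
  else None.

Definition good (V : {set T}) (v : T) : Prop :=
  v \in V /\ wiener V = wiener (V :\ v).

Definition is_cycle (V : {set T}) (c : seq T) : bool :=
  [&& all (mem V) c, ucycleb e c & (3 <= size c)%N].

Definition is_tree (V : {set T}) : Prop :=
  connectedb V /\ ~ (exists c, is_cycle V c).

End Graphs.

(* Main.v *)
Require Import Defs.
From mathcomp Require Import all_boot all_order.
From mathcomp Require Import zify.
Set Implicit Arguments. Unset Strict Implicit. Unset Printing Implicit Defensive.

Lemma distA (T : finType) (e : rel T) V x y k :
  walkb e V x y k -> k < #|T| -> dist e V x y <= k.
Proof.
move=> Hw Hk; rewrite /dist; case: (leqP (find (walkb e V x y) (iota 0 #|T|)) k) => // H.
have := before_find 0 H; rewrite nth_iota // add0n Hw //.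
Qed.

Lemma distB (T : finType) (e : rel T) V x y k :
  walkb e V x y k -> k < #|T| -> walkb e V x y (dist e V x y) && (dist e V x y < #|T|).
Proof.
move=> Hw Hk.
have Hh : has (walkb e V x y) (iota 0 #|T|).
  by apply/hasP; exists k => //; rewrite mem_iota.
have := nth_find 0 Hh; have := Hh; rewrite has_find size_iota => Hl.
rewrite nth_iota // add0n /dist => ->; exact: Hl.
Qed.

Lemma walk_of_seq (T : finType) (e : rel T) V x s :
  path (relV e V) x s -> walkb e V x (last x s) (size s).
Proof. by move=> Hp; apply/existsP; exists (in_tuple s); rewrite /= Hp eqxx. Qed.

Lemma conn_walk (T : finType) (e : rel T) V x y :
  connect (relV e V) x y -> exists k, k < #|T| /\ walkb e V x y k.
Proof.
move/connectP=> [p Hp ->]; case: (shortenP Hp) => p' Hp' Hu _.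
exists (size p'); split; last exact: walk_of_seq.
have := max_card (mem (x :: p')); rewrite (card_uniqP Hu) /=; lia.
Qed.

Lemma dist_pos (T : finType) (e : rel T) V x y :
  x != y -> 0 < dist e V x y.
Proof.
move=> Hxy; rewrite /dist.
have : 0 < #|T| by apply/card_gt0P; exists x.
case: #|T| => // n _ /=.
case: ifP => // /existsP [t /andP [_]]; rewrite tuple0 /= => /eqP E.
by rewrite E eqxx in Hxy.
Qed.

Lemma sum_sub (I : finType) (P Q : pred I) (f : I -> nat) :
  (forall i, P i -> Q i) -> \sum_(i | P i) f i <= \sum_(i | Q i) f i.
Proof.
move=> H; rewrite [X in _ <= X](bigID P) /=.
rewrite (eq_bigl (fun i => Q i && P i)) ?leq_addr //.
by move=> i; case: (boolP (P i)) => Hp; rewrite ?andbT ?andbF ?H.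
Qed.

Lemma sum_lt (I : finType) (P : pred I) (f g : I -> nat) i0 :
  P i0 -> (forall i, P i -> f i <= g i) -> f i0 < g i0 ->
  \sum_(i | P i) f i < \sum_(i | P i) g i.
Proof.
move=> Hi H Hlt; rewrite (bigD1 i0) //= [X in _ < X](bigD1 i0) //=.
have : \sum_(i | P i && (i != i0)) f i <= \sum_(i | P i && (i != i0)) g i.
  by apply: leq_sum => i /andP [Hp _]; apply: H.
lia.
Qed.
Lemma path_mem (T : finType) (e : rel T) (V : {set T}) x p :
  path (relV e V) x p -> all (mem V) p.
Proof.
elim: p x => //= a p IH x /andP [/and3P [_ Ha _] Hp]; rewrite Ha /=; exact: IH Hp.
Qed.

Lemma path_relV (T : finType) (e : rel T) (V : {set T}) x p :
  path (relV e V) x p -> path e x p.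
Proof. by apply: sub_path => a b /and3P []. Qed.

Lemma path_to_relV (T : finType) (e : rel T) (V : {set T}) x p :
  path e x p -> x \in V -> all (mem V) p -> path (relV e V) x p.
Proof.
elim: p x => //= a p IH x /andP [Hxa Hp] Hx /andP [Ha Hall].
by rewrite /relV Hx Ha Hxa /=; apply: IH.
Qed.

Lemma common (T : finType) (e : rel T) (v a b : T) :
  symmetric e -> irreflexive e ->
  (forall c : seq T, is_cycle e [set: T] c -> (size c <= 4)%N) ->
  connectedb e ([set: T] :\ v) ->
  e v a -> e v b -> a != b -> ~~ e a b ->
  exists c, [&& c != v, e a c & e c b].
Proof.
move=> Hsym Hirr Hcyc Hc Hva Hvb Hab Hnab.
have Hav : a != v by apply/eqP => E; rewrite E Hirr in Hva.
have Hbv : b != v by apply/eqP => E; rewrite E Hirr in Hvb.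
have HaV : a \in [set: T] :\ v by rewrite in_setD1 Hav in_setT.
have HbV : b \in [set: T] :\ v by rewrite in_setD1 Hbv in_setT.
have := forallP Hc a; rewrite HaV /= => /forallP /(_ b); rewrite HbV /=.
move/connectP=> [p Hp Eb]; move: Eb; case: (shortenP Hp) => p' Hp' Hu _ Eb {Hp p}; subst b.
have Hall := path_mem Hp'.
have Hnv : v \notin a :: p'.
  apply/negP => /= Hin; move: Hin; rewrite inE => /orP [/eqP E|Hin].
    by rewrite E eqxx in Hav.
  by move/allP: Hall => /(_ v Hin); rewrite /= in_setD1 eqxx.
have Hcy : is_cycle e [set: T] (v :: a :: p').
  rewrite /is_cycle; apply/and3P; split.
  - by apply/allP => z _; rewrite /= in_setT.
  - rewrite /ucycleb /= Hva /=; apply/andP; split.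
      by rewrite rcons_path (path_relV Hp') /= Hsym.
    by rewrite Hnv.
  - by case: p' Hab {Hp' Hu Hall Hnv Hvb Hbv Hnab HbV} => //=; rewrite eqxx.
have := Hcyc _ Hcy.
case: p' Hp' Hu Hall Hnv Hvb Hbv Hab Hnab HbV {Hcy} => [|c [|b' [|? ?]]] //=.
- by move=> _ _ _ _ _ _; rewrite eqxx.
- by move=> /andP [/and3P [_ _ ->]].
- move=> /and3P [/and3P [_ _ Hac] /and3P [_ _ Hcb] _] _ /and3P [Hc' _ _] *.
  by exists c; move: Hc'; rewrite in_setD1 Hac Hcb => /andP [->].
Qed.
Lemma sz1 (T : Type) (p1 p3 : seq T) x y : size (p1 ++ p3) <= size (p1 ++ x :: y :: p3).
Proof. rewrite !size_cat /= leq_add2l; exact: leq_trans (leqnSn _) (leqnSn _). Qed.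
Lemma sz2 (T : Type) (p1 p3 : seq T) x y : size (p1 ++ y :: p3) <= size (p1 ++ x :: y :: p3).
Proof. by rewrite !size_cat /= leq_add2l. Qed.
Lemma sz3 (T : Type) (p1 p3 : seq T) x y z : size (p1 ++ z :: y :: p3) <= size (p1 ++ x :: y :: p3).
Proof. by rewrite !size_cat. Qed.

Lemma reroute (T : finType) (e : rel T) (v x y : T) :
  symmetric e -> irreflexive e ->
  (forall c : seq T, is_cycle e [set: T] c -> (size c <= 4)%N) ->
  connectedb e ([set: T] :\ v) ->
  x != v -> y != v -> forall n s, count_mem v s <= n -> path e x s -> last x s = y ->
  exists s', [/\ path (relV e ([set: T] :\ v)) x s', last x s' = y & size s' <= size s].
Proof.
move=> Hsym Hirr Hcyc Hc Hx Hy n; elim: n => [|n IH] s Hn Hp Hl.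
  exists s; split => //; apply: path_to_relV => //.
    by rewrite in_setD1 Hx in_setT.
  apply/allP => z Hz; rewrite /= in_setD1 in_setT andbT.
  apply/negP => /eqP E; subst z.
  by move: Hn; rewrite leqn0 => /eqP /count_memPn; rewrite Hz.
case: (boolP (v \in s)) => Hvs; last first.
  by apply: (IH s) => //; move/count_memPn: Hvs => ->.
case/splitPr: Hvs Hn Hp Hl => p1 p2.
case: p2 => [|b p3].
  by rewrite last_cat /= => _ _ E; rewrite E eqxx in Hy.
rewrite cat_path last_cat /= => Hn /and4P [Hp1 Hav Hvb Hp3] Hl.
set a := last x p1 in Hav Hvb Hp3 Hl.
have Hbv : b != v by apply/eqP => E; rewrite E Hirr in Hvb.
have Ecnt : count_mem v (p1 ++ v :: b :: p3) = (count_mem v p1 + count_mem v p3).+1.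
  by rewrite count_cat /= eqxx (negbTE Hbv) /=; lia.
rewrite Ecnt in Hn.
case: (eqVneq a b) => [Eab|Nab].
  have [s' [H1 H2 H3]] : exists s', [/\ path (relV e ([set: T] :\ v)) x s', last x s' = y & size s' <= size (p1 ++ p3)].
    apply: IH; first by rewrite count_cat; lia.
      by rewrite cat_path Hp1 -/a Eab.
    by rewrite last_cat -/a Eab.
  by exists s'; split => //; apply: leq_trans H3 (sz1 _ _ _ _ ).
case: (boolP (e a b)) => Hab.
  have [s' [H1 H2 H3]] : exists s', [/\ path (relV e ([set: T] :\ v)) x s', last x s' = y & size s' <= size (p1 ++ b :: p3)].
    apply: IH; first by rewrite count_cat /= (negbTE Hbv) add0n; exact: Hn.
      by rewrite cat_path Hp1 -/a /= Hab.
    by rewrite last_cat -/a.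
  by exists s'; split => //; apply: leq_trans H3 (sz2 _ _ _ _ ).
have [c /and3P [Hcv Hac Hcb]] := common Hsym Hirr Hcyc Hc (etrans (Hsym _ _) Hav) Hvb Nab Hab.
have Ecv : (c == v) = false by apply/negbTE.
have [s' [H1 H2 H3]] : exists s', [/\ path (relV e ([set: T] :\ v)) x s', last x s' = y & size s' <= size (p1 ++ c :: b :: p3)].
  apply: IH; first by rewrite count_cat /= Ecv (negbTE Hbv) !add0n; exact: Hn.
    by rewrite cat_path Hp1 -/a /= Hac Hcb.
  by rewrite last_cat -/a.
by exists s'; split => //; apply: leq_trans H3 (sz3 _ _ _ _ _).
Qed.

Lemma lt_aux a b c : 0 < b -> a <= c -> a < b + c.
Proof. lia. Qed.

Lemma distle (T : finType) (e : rel T) (v u w : T) :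
  symmetric e -> irreflexive e ->
  (forall c : seq T, is_cycle e [set: T] c -> (size c <= 4)%N) ->
  connectedb e [set: T] ->
  connectedb e ([set: T] :\ v) ->
  u != v -> w != v -> dist e ([set: T] :\ v) u w <= dist e [set: T] u w.
Proof.
move=> Hsym Hirr Hcyc Hc Hc' Hu Hw.
have := forallP Hc u; rewrite in_setT /= => /forallP /(_ w); rewrite in_setT /=.
move/conn_walk => [k [Hk Hwk]].
have /andP [Hwd Hdl] := distB Hwk Hk.
case/existsP: Hwd => t /andP [Hpt /eqP Hlt].
have [s' [H1 H2 H3]] := reroute Hsym Hirr Hcyc Hc' Hu Hw (leqnn _) (path_relV Hpt) Hlt.
have := walk_of_seq H1; rewrite H2 => Hw'.
rewrite size_tuple in H3.
apply: leq_trans (distA Hw' (leq_ltn_trans H3 Hdl)) H3.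
Qed.

Theorem theorem4 (T : finType) (e : rel T) :
  symmetric e -> irreflexive e ->
  connectedb e [set: T] ->
  ~ is_tree e [set: T] ->
  (forall c : seq T, is_cycle e [set: T] c -> (size c <= 4)%N) ->
  forall v : T, ~ good e [set: T] v.
Proof.
move=> Hsym Hirr Hconn Hnt Hcyc v [_ Hg].
apply: Hnt; split => // [[c Hcy]].
have [w0 Hw0] : exists w0, w0 != v.
  move: Hcy => /and3P [_ /andP [_ Hu] Hs].
  case: c Hu Hs => [|a [|b c']] //= /andP [Hab _] _.
  case: (eqVneq a v) => [Eav|Hav]; last by exists a.
  by exists b; apply/eqP => Ebv; rewrite Eav Ebv inE eqxx in Hab.
move: Hg; rewrite /wiener Hconn; case: ifP => // HV' [].
set V' := [set: T] :\ v.
set d := dist e [set: T]; set d' := dist e V'.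
set F := fun u => \sum_(w in [set: T] | enum_rank u < enum_rank w) d u w.
set G := fun u => \sum_(w in V' | enum_rank u < enum_rank w) d u w.
have HV'm : forall u, (u \in V') = (u != v) by move=> u; rewrite in_setD1 in_setT andbT.
have H1 : \sum_(u in V') \sum_(w in V' | enum_rank u < enum_rank w) d' u w <= \sum_(u in V') G u.
  apply: leq_sum => u Hu; apply: leq_sum => w /andP [Hw _].
  by apply: distle => //; rewrite -HV'm.
have HGF : forall u, G u <= F u.
  by move=> u; apply: sum_sub => w /andP [_ ->]; rewrite in_setT.
have Hd : forall x y, x != y -> 0 < d x y by move=> x y; apply: dist_pos.
suff H2 : \sum_(u in V') G u < \sum_(u in [set: T]) F u.
  by move=> E; have := leq_ltn_trans H1 H2; rewrite -E ltnn.
have Hrk : enum_rank v != enum_rank w0.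
  by apply/negP => /eqP /enum_rank_inj E; rewrite E eqxx in Hw0.
case: (ltngtP (enum_rank v) (enum_rank w0)) => Hr; last by rewrite -val_eqE /= Hr eqxx in Hrk.
- rewrite [X in _ < X](bigD1 v) ?in_setT //=.
  have -> : \sum_(u in V') G u = \sum_(u in [set: T] | u != v) G u.
    by apply: eq_bigl => u; rewrite HV'm in_setT.
  apply: lt_aux; last by apply: leq_sum => u _.
  rewrite /F (bigD1 w0) /=; last by rewrite in_setT Hr.
  apply: ltn_addr; apply: Hd; by rewrite eq_sym.
- apply: (@leq_trans (\sum_(u in V') F u)); last by apply: sum_sub => u; rewrite in_setT.
  apply: (sum_lt (i0 := w0)); first by rewrite HV'm.
    by move=> u _; apply: HGF.
  rewrite /F (bigD1 v) /=; last by rewrite in_setT Hr.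
  have -> : G w0 = \sum_(i | ((i \in [set: T]) && (enum_rank w0 < enum_rank i)) && (i != v)) d w0 i.
    by apply: eq_bigl => u; rewrite HV'm in_setT andbC.
  exact: lt_aux (Hd w0 v Hw0) (leqnn _).
Qed.
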